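(* Let $Q$ be a quiver and $\theta\in\mathbb{Z}^{Q_0}$ with $\nabla(Q,\theta)\ne\emptyset$. Suppose $S\subset Q_0$ is such that there is at most one arrow $a$ with $a^+\in S$, $a^-\notin S$ and at most one arrow $b$ with $b^+\notin S$, $b^-\in S$. Then $a$ (if it exists) is contractable when $\theta(S)\ge0$, and $b$ (if it exists) is contractable when $\theta(S)\le0$, where $\theta(S)=\sum_{v\in S}\theta(v)$.
   Context: A quiver $Q$: vertices $Q_0$, arrows $Q_1$, $a$ from $a^-$ to $a^+$. $\nabla(Q,\theta)=\{x\in\mathbb{R}_{\ge0}^{Q_1}\mid\forall v:\ \theta(v)=\sum_{a^+=v}x(a)-\sum_{a^-=v}x(a)\}$. Contracting a non-loop arrow $a$ gives $(\hat Q,\hat\theta)$: delete $a$, glue $a^-$ and $a^+$ to a vertex $v$, $\hat\theta(v)=\theta(a^-)+\theta(a^+)$, $\hat\theta=\theta$ elsewhere. The arrow is contractable if $\nabla(Q,\theta)$ and $\nabla(\hat Q,\hat\theta)$ are integral-affinely equivalent, i.e. there is an affine isomorphism between their affine spans mapping the lattice points ($\mathbb{Z}^{Q_1}$, resp. $\mathbb{Z}^{\hat Q_1}$) of one span onto those of the other and one polyhedron onto the other. *)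

(* Defs.v *)
From mathcomp Require Import all_boot all_order all_algebra.
From mathcomp Require Import reals.
Set Implicit Arguments. Unset Strict Implicit. Unset Printing Implicit Defensive.
Import Order.TTheory GRing.Theory Num.Theory.
Local Open Scope ring_scope.

Section Defs.
Variable R : realType.

(* A quiver is given by a finite vertex type V, restricted to the vertex set
   [vs] (a predicate on V), a finite arrow type A and maps
   src (a^-), tgt (a^+) : A -> V.
   nabla(Q,θ) = { x in R_{>=0}^{Q_1} | forall v, θ(v) = Σ_{a^+=v} x(a) - Σ_{a^-=v} x(a) } *)
Definition nabla (V A : finType) (vs : pred V) (src tgt : A -> V)
    (th : V -> int) : (A -> R) -> Prop :=
  fun x => (forall e, 0 <= x e) /\
    forall v, vs v ->
      (th v)%:~R = \sum_(e | tgt e == v) x e - \sum_(e | src e == v) x e.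

Definition aff_span (A : finType) (P : (A -> R) -> Prop) : (A -> R) -> Prop :=
  fun y => exists (n : nat) (p : 'I_n -> A -> R) (l : 'I_n -> R),
    (forall i, P (p i)) /\ \sum_(i < n) l i = 1 /\
    forall e, y e = \sum_(i < n) l i * p i e.

Definition integral_pt (A : finType) (x : A -> R) : Prop :=
  exists z : A -> int, forall e, x e = (z e)%:~R.

Definition int_aff_equiv (A B : finType) (P : (A -> R) -> Prop)
    (P' : (B -> R) -> Prop) : Prop :=
  exists (M : B -> A -> R) (c : B -> R),
    let f := fun (x : A -> R) (b : B) => c b + \sum_(a : A) M b a * x a in
    [/\ forall x y, aff_span P x -> aff_span P y -> f x = f y -> x = y,
        forall x, aff_span P x -> aff_span P' (f x),
        forall y, aff_span P' y -> exists2 x, aff_span P x & f x = y,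
        forall x, aff_span P x -> (integral_pt x <-> integral_pt (f x))
      & forall x, aff_span P x -> (P x <-> P' (f x))].

(* Contraction of the arrow a of the quiver (V, A, src, tgt):
   delete a and glue a^- and a^+ into one vertex, represented by a^+
   (so the vertex set becomes V \ {a^-}); θ^(a^+) = θ(a^-) + θ(a^+). *)
Definition merge (V A : finType) (src tgt : A -> V) (a : A) (v : V) : V :=
  if v == src a then tgt a else v.

Definition contracted_nabla (V A : finType) (src tgt : A -> V) (th : V -> int)
    (a : A) : ({e : A | e != a} -> R) -> Prop :=
  nabla [pred v | v != src a]
    (fun e : {e : A | e != a} => merge src tgt a (src (val e)))
    (fun e : {e : A | e != a} => merge src tgt a (tgt (val e)))
    (fun v => if v == tgt a then th (src a) + th (tgt a) else th v).
Arguments contracted_nabla {V A} src tgt th a _.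

Definition contractable (V A : finType) (src tgt : A -> V) (th : V -> int)
    (a : A) : Prop :=
  src a != tgt a /\
  int_aff_equiv (nabla predT src tgt th) (contracted_nabla src tgt th a).

End Defs.

(* Main.v *)
Require Import Defs.
From mathcomp Require Import all_boot all_order all_algebra.
From mathcomp Require Import reals.
From mathcomp Require Import ring.
From Stdlib Require Import FunctionalExtensionality.
Import Order.TTheory GRing.Theory Num.Theory.
Local Open Scope ring_scope.

Section Contract.
Variables (R : realType) (V A : finType) (src tgt : A -> V) (th : V -> int) (a : A).
Hypothesis sa_ta : src a != tgt a.
Local Notation s := (src a).
Local Notation t := (tgt a).
Local Notation SA := {e : A | e != a}.

Definition D (x : A -> R) v := \sum_(e | tgt e == v) x e - \sum_(e | src e == v) x e.
Definition flow (x : A -> R) := forall v, (th v)%:~R = D x v.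

Lemma nablaE x : nabla predT src tgt th x <-> (forall e, 0 <= x e) /\ flow x.
Proof.
rewrite /nabla /flow /D; split; case=> h1 h2; split=> //.
by move=> v; apply: (h2 v).
Qed.

Lemma sum_coef (I : finType) (P : pred I) (F : I -> R) :
  \sum_(e | P e) F e = \sum_e (P e)%:R * F e.
Proof. rewrite big_mkcond; apply: eq_bigr => e _; case: (P e); by rewrite ?mul1r ?mul0r. Qed.

Lemma DE x v : D x v = \sum_e ((tgt e == v)%:R - (src e == v)%:R) * x e.
Proof.
by rewrite /D (@sum_coef A (fun e => tgt e == v) x) (@sum_coef A (fun e => src e == v) x) -sumrB; apply: eq_bigr => e _; rewrite mulrBl. Qed.

Definition rs (x : A -> R) : SA -> R := fun e => x (val e).

Lemma sum_sub (P : pred A) (F : A -> R) :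
  \sum_(e : SA | P (val e)) F (val e) = \sum_e (P e && (e != a))%:R * F e.
Proof.
rewrite -sum_coef (@reindex_omap _ _ _ A SA val insub (fun e => P e && (e != a)) F).
  by apply: eq_bigl => e; rewrite (valP e) valK eqxx !andbT.
by move=> e /andP[_ h]; rewrite insubT.
Qed.

Definition D' (y : SA -> R) v :=
  \sum_(e : SA | Defs.merge src tgt a (tgt (val e)) == v) y e -
  \sum_(e : SA | Defs.merge src tgt a (src (val e)) == v) y e.

Definition th' v := if v == t then th s + th t else th v.

Lemma cnablaE y : @contracted_nabla R V A src tgt th a y <->
   (forall e, 0 <= y e) /\ forall v, v != s -> (th' v)%:~R = D' y v.
Proof.
rewrite /contracted_nabla /nabla /D' /th'; split; case=> h1 h2; split=> //.
Qed.

Lemma mergeE u v : v != s ->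
  (Defs.merge src tgt a u == v) = if v == t then (u == t) || (u == s) else u == v.
Proof.
move=> vs; rewrite /Defs.merge; case: (eqVneq u s) => [->|us].
  rewrite orbT [t == v]eq_sym; case: eqP => // _.
  by rewrite eq_sym (negbTE vs).
by rewrite orbF; case: (eqVneq v t) => [->|].
Qed.

Lemma coefU u : ((u == t) || (u == s))%:R = (u == t)%:R + (u == s)%:R :> R.
Proof.
case: (eqVneq u t) => [->|ut]; last by rewrite add0r.
by rewrite eq_sym (negbTE sa_ta) addr0.
Qed.

Lemma L1 x v : v != s -> D' (rs x) v = if v == t then D x t + D x s else D x v.
Proof.
move=> vs; rewrite /D' (sum_sub (fun e => Defs.merge src tgt a (tgt e) == v) x)
  (sum_sub (fun e => Defs.merge src tgt a (src e) == v) x) -sumrB !DE.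
case: (eqVneq v t) => [->|vt].
  rewrite -big_split /=; apply: eq_bigr => e _.
  have ts : t != s by rewrite eq_sym.
  rewrite !mergeE // eqxx.
  case: (eqVneq e a) => [->|ea] /=; last by rewrite !andbT !coefU; ring.
  rewrite !andbF !eqxx (negbTE sa_ta) (negbTE ts) /=; ring.
apply: eq_bigr => e _; rewrite !mergeE // (negbTE vt).
case: (eqVneq e a) => [->|ea] /=; last by rewrite !andbT; ring.
rewrite !andbF eq_sym (negbTE vt) eq_sym (negbTE vs) /=; ring.
Qed.

Lemma flow_rs x : flow x -> forall v, v != s -> (th' v)%:~R = D' (rs x) v.
Proof. rewrite /flow => fx v vs; rewrite L1 // /th'; case: (v == t); by rewrite ?intrD !fx // addrC. Qed.

Lemma nabla_rs x : nabla predT src tgt th x -> @contracted_nabla R V A src tgt th a (rs x).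
Proof.
case/nablaE => h1 h2; apply/cnablaE; split; first by move=> e; apply: h1.
exact: flow_rs.
Qed.

Lemma aff_flow x : aff_span (nabla predT src tgt th) x -> flow x.
Proof.
case=> n [p [l [hp [hl hx]]]] v.
rewrite DE (eq_bigr (fun e => \sum_(i < n) l i * (((tgt e == v)%:R - (src e == v)%:R) * p i e))); last first.
  by move=> e _; rewrite hx mulr_sumr; apply: eq_bigr => i _; ring.
rewrite exchange_big /= (eq_bigr (fun i => l i * (th v)%:~R)); last first.
  move=> i _; rewrite -mulr_sumr; congr (_ * _).
  by case/nablaE: (hp i) => _ /(_ v) ->; rewrite DE.
by rewrite -mulr_suml hl mul1r.
Qed.

Definition K (x : A -> R) := \sum_(e | e != a) ((tgt e == t)%:R - (src e == t)%:R) * x e.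

Lemma DtE x : D x t = x a + K x.
Proof. by rewrite DE (bigD1 a) //= eqxx (negbTE sa_ta) /= subr0 mul1r. Qed.

Lemma xa_eq x : flow x -> x a = (th t)%:~R - K x.
Proof. by move=> fx; rewrite (fx t) DtE addrK. Qed.

Definition ext {T : Type} (d : T) (y : SA -> T) (e : A) : T := oapp y d (insub e).

Definition g (y : SA -> R) (e : A) : R :=
  if e == a then (th t)%:~R - K (ext 0 y) else ext 0 y e.

Lemma ext_ne T d (y : SA -> T) e (ea : e != a) : ext d y e = y (Sub e ea).
Proof. by rewrite /ext insubT. Qed.

Lemma g_ne y e (ea : e != a) : g y e = y (Sub e ea).
Proof. by rewrite /g (negbTE ea) ext_ne. Qed.

Lemma g_val y b : g y (val b) = y b.
Proof. by rewrite /g (negbTE (valP b)) /ext valK. Qed.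

Lemma rs_g y : rs (g y) = y.
Proof. by apply: functional_extensionality => b; rewrite /rs g_val. Qed.

Lemma K_ext x y : (forall e, e != a -> x e = y e) -> K x = K y.
Proof. by move=> h; apply: eq_bigr => e ea; rewrite h. Qed.

Lemma Dt_g y : D (g y) t = (th t)%:~R.
Proof.
rewrite DtE /g eqxx (@K_ext (g y) (ext 0 y)); first by rewrite subrK.
by move=> e ea; rewrite /g (negbTE ea).
Qed.

Lemma g_flow y : (forall v, v != s -> (th' v)%:~R = D' y v) -> flow (g y).
Proof.
move=> hy v.
case: (eqVneq v t) => [->|vt]; first by rewrite Dt_g.
case: (eqVneq v s) => [->|vs].
  have := hy t; rewrite eq_sym sa_ta => /(_ isT).
  rewrite -[y in D' y t](rs_g y) L1 1?eq_sym // eqxx Dt_g /th' eqxx intrD addrC => h.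
  by move/addrI: h.
have := hy v vs; rewrite /th' (negbTE vt) => ->.
by rewrite -[y in D' y v](rs_g y) L1 // (negbTE vt).
Qed.

Lemma fE x : (fun b : SA => 0 + \sum_(e : A) ((val b == e)%:R : R) * x e) = rs x.
Proof.
apply: functional_extensionality => b; rewrite add0r (bigD1 (val b)) //= eqxx mul1r.
by rewrite big1 ?addr0 // => e ne; rewrite eq_sym (negbTE ne) mul0r.
Qed.

Lemma bcast (b : bool) : ((b%:R : int)%:~R : R) = b%:R.
Proof. by case: b. Qed.


Definition Kz (z : A -> int) : int :=
  \sum_(e | e != a) ((tgt e == t)%:R - (src e == t)%:R) * z e.

Lemma Kz_cast z : (Kz z)%:~R = K (fun e => (z e)%:~R).
Proof.
rewrite /Kz /K (big_morph (fun n : int => (n%:~R : R)) (@intrD R) (mulr0z 1)).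
by apply: eq_bigr => e _; rewrite intrM intrB !bcast.
Qed.

Lemma contract_key :
  (forall x, flow x -> (forall e, e != a -> 0 <= x e) -> 0 <= x a) ->
  contractable R src tgt th a.
Proof.
move=> H; split => //.
have gN : forall y, @contracted_nabla R V A src tgt th a y -> nabla predT src tgt th (g y).
  move=> y /cnablaE [h1 h2]; have fy := g_flow y h2.
  apply/nablaE; split => // e; case: (eqVneq e a) => [->|ea]; last by rewrite (g_ne y e ea).
  by apply: H => // e' ea'; rewrite (g_ne y e' ea').
have Pback : forall x, flow x -> @contracted_nabla R V A src tgt th a (rs x) -> nabla predT src tgt th x.
  move=> x fx /cnablaE [h1 _]; apply/nablaE; split => // e.
  case: (eqVneq e a) => [->|ea]; last by have := h1 (Sub e ea).
  by apply: H => // e' ea'; have := h1 (Sub e' ea').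
exists (fun (b : SA) (e : A) => ((val b == e)%:R : R)), (fun _ => 0).
move=> f; have fE' : forall x, f x = rs x by move=> x; rewrite /f; apply: fE.
split.
- move=> x y hx hy; rewrite !fE' => hxy.
  apply: functional_extensionality => e; case: (eqVneq e a) => [->|ea].
    rewrite (xa_eq x (aff_flow x hx)) (xa_eq y (aff_flow y hy)); congr (_ - _).
    apply: K_ext => e' ne.
    exact: (congr1 (fun h => h (Sub e' ne)) hxy).
  exact: (congr1 (fun h => h (Sub e ea)) hxy).
- move=> x [n [p [l [hp [hl hx]]]]]; rewrite fE'.
  exists n, (fun i => rs (p i)), l; split; first by move=> i; apply: nabla_rs.
  by split => // b; rewrite /rs hx.
- move=> y [n [p [l [hp [hl hy]]]]].
  exists (fun e => \sum_(i < n) l i * g (p i) e).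
    exists n, (fun i => g (p i)), l; split; first by move=> i; apply: gN.
    by split.
  rewrite fE'; apply: functional_extensionality => b; rewrite /rs hy.
  by apply: eq_bigr => i _; rewrite g_val.
- move=> x hx; rewrite fE'; split.
    by case=> z hz; exists (fun b => z (val b)) => b; apply: hz.
  case=> z hz.
  exists (fun e => if e == a then th t - Kz (ext 0 z) else ext 0 z e) => e.
  case: (eqVneq e a) => [->|ea].
    rewrite (xa_eq x (aff_flow x hx)) intrB Kz_cast; congr (_ - _).
    apply: K_ext => e' ea'.
    by rewrite (@ext_ne _ _ _ _ ea') -hz /rs SubK.
  by rewrite (@ext_ne _ _ _ _ ea) -hz /rs SubK.
- move=> x hx; rewrite fE'; split; first exact: nabla_rs.
  exact: Pback (aff_flow x hx).
Qed.


Lemma ind_sum (S : {set V}) (u : V) : \sum_(v in S) ((u == v)%:R : R) = (u \in S)%:R.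
Proof.
case: (boolP (u \in S)) => uS.
  rewrite (bigD1 u) //= eqxx big1 ?addr0 // => v /andP[_ ne].
  by rewrite eq_sym (negbTE ne).
rewrite big1 // => v vS.
have /negbTE -> : u != v by apply/eqP => uv; rewrite uv vS in uS.
done.
Qed.

Lemma cut (S : {set V}) x : flow x ->
  (\sum_(v in S) th v)%:~R =
  \sum_(e | (tgt e \in S) && (src e \notin S)) x e -
  \sum_(e | (tgt e \notin S) && (src e \in S)) x e.
Proof.
move=> fx.
rewrite (big_morph (fun n : int => (n%:~R : R)) (@intrD R) (mulr0z 1)).
rewrite (eq_bigr (fun v => \sum_e ((tgt e == v)%:R - (src e == v)%:R) * x e)); last first.
  by move=> v _; rewrite fx DE.
rewrite exchange_big /= (@sum_coef A (fun e => (tgt e \in S) && (src e \notin S)) x).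
rewrite (@sum_coef A (fun e => (tgt e \notin S) && (src e \in S)) x) -sumrB.
apply: eq_bigr => e _; rewrite -mulr_suml sumrB !ind_sum.
by case: (tgt e \in S); case: (src e \in S) => /=; ring.
Qed.

End Contract.

Theorem proposition4p6 (R : realType) (V A : finType) (src tgt : A -> V)
    (th : V -> int) (S : {set V}) :
  (exists x : A -> R, nabla predT src tgt th x) ->
  (forall a a', tgt a \in S -> src a \notin S ->
                tgt a' \in S -> src a' \notin S -> a = a') ->
  (forall b b', tgt b \notin S -> src b \in S ->
                tgt b' \notin S -> src b' \in S -> b = b') ->
  (forall a, tgt a \in S -> src a \notin S ->
     0 <= \sum_(v in S) th v -> contractable R src tgt th a) /\
  (forall b, tgt b \notin S -> src b \in S ->
     \sum_(v in S) th v <= 0 -> contractable R src tgt th b).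
Proof.
move=> _ uA uB; split.
- move=> a ta sa h0.
  have sata : src a != tgt a by apply/eqP => e; rewrite e ta in sa.
  apply: (contract_key R V A src tgt th a sata) => x fx hn.
  have hc := cut R V A src tgt th S x fx.
  rewrite (@big_pred1 _ _ _ _ a) in hc; last first.
    move=> e /=; case: (eqVneq e a) => [->|ne]; first by rewrite ta sa.
    by apply/negbTE/negP => /andP[h1 h2]; move/eqP: ne; apply; exact: uA.
  have -> : x a = (\sum_(v in S) th v)%:~R +
     \sum_(e | (tgt e \notin S) && (src e \in S)) x e by rewrite hc subrK.
  apply: addr_ge0; first by rewrite ler0z.
  apply: sumr_ge0 => e /andP[h _]; apply: hn; apply/eqP => ea.
  by rewrite ea ta in h.
- move=> b tb sb h0.
  have sbtb : src b != tgt b by apply/eqP => e; move: sb; rewrite e (negbTE tb).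
  apply: (contract_key R V A src tgt th b sbtb) => x fx hn.
  have hc := cut R V A src tgt th S x fx.
  rewrite [X in _ = _ - X](@big_pred1 _ _ _ _ b) in hc; last first.
    move=> e /=; case: (eqVneq e b) => [->|ne]; first by rewrite tb sb.
    by apply/negbTE/negP => /andP[h1 h2]; move/eqP: ne; apply; exact: uB.
  have -> : x b = \sum_(e | (tgt e \in S) && (src e \notin S)) x e -
     (\sum_(v in S) th v)%:~R by rewrite hc opprB addrC subrK.
  apply: addr_ge0; last by rewrite oppr_ge0 lerz0.
  apply: sumr_ge0 => e /andP[h _]; apply: hn; apply/eqP => eb.
  by move: h; rewrite eb (negbTE tb).
Qed.
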